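(* Under the standing assumptions, for $0\le i\le d$ the following holds on $V$: $$E^*_0\,\tau_i(A)\,E^*_0=\frac{\zeta_i\,E^*_0}{(\theta^*_0-\theta^*_1)(\theta^*_0-\theta^*_2)\cdots(\theta^*_0-\theta^*_i)}.$$
   Context: Let $\mathbb F$ be an algebraically closed field, $d\ge0$, and $q,a,b,c,a^*,b^*,c^*\in\mathbb F$ with $q,b,c,b^*,c^*$ nonzero and $q^2\ne\pm1$. Put $\theta_i=a+bq^{2i-d}+cq^{d-2i}$ and $\theta^*_i=a^*+b^*q^{2i-d}+c^*q^{d-2i}$ ($0\le i\le d$), and assume $\theta_0,\dots,\theta_d$ are mutually distinct and $\theta^*_0,\dots,\theta^*_d$ are mutually distinct (this forces $q^{2i}\ne1$ for $1\le i\le d$). For an indeterminate $\lambda$, $\tau_i=(\lambda-\theta_0)(\lambda-\theta_1)\cdots(\lambda-\theta_{i-1})$ ($\tau_0=1$). $U_q(\widehat{\mathfrak{sl}}_2)$ is the associative unital $\mathbb F$-algebra with generators $e_i^{\pm},K_i^{\pm1}$ ($i\in\{0,1\}$) and relations $K_iK_i^{-1}=K_i^{-1}K_i=1$, $K_0K_1=K_1K_0$, $K_ie_i^{\pm}K_i^{-1}=q^{\pm2}e_i^{\pm}$, $K_ie_j^{\pm}K_i^{-1}=q^{\mp2}e_j^{\pm}$ ($i\ne j$), $e_i^+e_i^--e_i^-e_i^+=(K_i-K_i^{-1})/(q-q^{-1})$, $e_0^{\pm}e_1^{\mp}=e_1^{\mp}e_0^{\pm}$, and the $q$-Serre relations $(e_i^\pm)^3e_j^\pm-[3]_q(e_i^\pm)^2e_j^\pm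 e_i^\pm+[3]_qe_i^\pm e_j^\pm(e_i^\pm)^2-e_j^\pm(e_i^\pm)^3=0$ ($i\ne j$), where $[3]_q=q^2+1+q^{-2}$. Tensor products of modules are formed via $e_i^+(v\otimes w)=e_i^+v\otimes K_iw+v\otimes e_i^+w$, $e_i^-(v\otimes w)=e_i^-v\otimes w+K_i^{-1}v\otimes e_i^-w$, $K_i(v\otimes w)=K_iv\otimes K_iw$. For nonzero $\alpha\in\mathbb F$, $V(\alpha)$ is the module with basis $x,y$ and $K_1x=qx$, $K_1y=q^{-1}y$, $e_1^-x=y$, $e_1^-y=0$, $e_1^+x=0$, $e_1^+y=x$, $K_0x=q^{-1}x$, $K_0y=qy$, $e_0^-x=0$, $e_0^-y=q\alpha^{-1}x$, $e_0^+x=q^{-1}\alpha y$, $e_0^+y=0$. $V=V(\alpha_1)\otimes\cdots\otimes V(\alpha_d)$ with nonzero $\alpha_i\in\mathbb F$ (for $d=0$, the trivial module where each $e_i^\pm$ acts as $0$ and each $K_i^{\pm1}$ as $1$). $U_0$ is the $1$-dimensional span of $x\otimes\cdots\otimes x$. Fix $u,v,u^*,v^*\in\mathbb F$ with $uv^*=-bb^*q^{-1}(q-q^{-1})^2$, $vu^*=-cc^*q^{-1}(q-q^{-1})^2$; set $R=ue_0^++ve_1^-K_1$, $L=u^*e_1^++v^*e_0^-K_0$, $A=a1+bK_0+cK_1+R$, $A^*=a^*1+b^*K_0+c^*K_1+L$, and $E^*_0=\prod_{1\le j\le d}(A^*-\theta^*_j1)/(\theta^*_0-\theta^*_j)$ in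 $U_q(\widehat{\mathfrak{sl}}_2)$. For $0\le i\le d$, $\zeta_i$ denotes the scalar by which $L^iR^i$ acts on $U_0$ (the split sequence of $V$). *)

(* Defs.v *)
From HB Require Import structures.
From mathcomp Require Import all_boot all_order all_algebra all_field.
Set Implicit Arguments. Unset Strict Implicit. Unset Printing Implicit Defensive.
Import Order.TTheory GRing.Theory Num.Theory.
Local Open Scope ring_scope.

(* The module V = V(alpha_1) (x) ... (x) V(alpha_d) of U_q(sl2^) is modelled
   concretely: operators on V are square matrices over F of size dimV s
   (= 2^d), acting on column vectors of coordinates.  For a single factor
   V(alpha) the basis is x (index 0), y (index 1).  The tensor product
   V(alpha) (x) W is realised by the Kronecker product (block matrices), so
   the basis vector x(x)...(x)x is the first coordinate vector. *)

Fixpoint dimV {F : Type} (s : seq F) : nat :=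
  match s with [::] => 1%N | _ :: s' => (dimV s' + dimV s')%N end.

Inductive gen := E0p | E0m | E1p | E1m | K0 | K1 | K0i | K1i.

Section Rep.
Variable F : fieldType.

Definition mx2 (m00 m01 m10 m11 : F) : 'M[F]_2 :=
  \matrix_(i < 2, j < 2)
    if (i == 0 :> nat) then (if (j == 0 :> nat) then m00 else m01)
    else (if (j == 0 :> nat) then m10 else m11).

Definition kron2 n (A : 'M[F]_2) (B : 'M[F]_n) : 'M[F]_(n + n) :=
  block_mx (A ord0 ord0 *: B) (A ord0 ord_max *: B)
           (A ord_max ord0 *: B) (A ord_max ord_max *: B).

(* action of the generators on the evaluation module V(alpha) *)
Definition rep1 (q alpha : F) (g : gen) : 'M[F]_2 :=
  match g with
  | K1 => mx2 q 0 0 q^-1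
  | K1i => mx2 q^-1 0 0 q
  | K0 => mx2 q^-1 0 0 q
  | K0i => mx2 q 0 0 q^-1
  | E1m => mx2 0 0 1 0
  | E1p => mx2 0 1 0 0
  | E0m => mx2 0 (q / alpha) 0 0
  | E0p => mx2 0 0 (alpha / q) 0
  end.

(* action on V(alpha_1) (x) ... (x) V(alpha_d), using the coproduct
   e^+ (v (x) w) = e^+ v (x) K w + v (x) e^+ w,
   e^- (v (x) w) = e^- v (x) w + K^{-1} v (x) e^- w,
   K (v (x) w) = K v (x) K w. *)
Fixpoint rep (q : F) (s : seq F) : gen -> 'M[F]_(dimV s) :=
  match s return gen -> 'M[F]_(dimV s) with
  | [::] => fun g => match g with
                     | K0 | K1 | K0i | K1i => 1%:M
                     | _ => 0
                     end
  | a :: s' => fun g =>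
      let r := rep q s' in
      let r1 := rep1 q a in
      match g with
      | E0p => kron2 (r1 E0p) (r K0) + kron2 1%:M (r E0p)
      | E1p => kron2 (r1 E1p) (r K1) + kron2 1%:M (r E1p)
      | E0m => kron2 (r1 E0m) 1%:M + kron2 (r1 K0i) (r E0m)
      | E1m => kron2 (r1 E1m) 1%:M + kron2 (r1 K1i) (r E1m)
      | K0 => kron2 (r1 K0) (r K0)
      | K1 => kron2 (r1 K1) (r K1)
      | K0i => kron2 (r1 K0i) (r K0i)
      | K1i => kron2 (r1 K1i) (r K1i)
      end
  end.

(* the vector x (x) x (x) ... (x) x spanning U_0 *)
Fixpoint xvec (s : seq F) : 'cV[F]_(dimV s) :=
  match s return 'cV[F]_(dimV s) with
  | [::] => 1%:M
  | _ :: s' => col_mx (xvec s') 0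
  end.

Definition theta (a b c q : F) (d i : nat) : F :=
  a + b * q ^ (2 * (i : int) - (d : int)) + c * q ^ ((d : int) - 2 * (i : int)).

Variables (q : F) (s : seq F).

Definition Rop (u v : F) : 'M[F]_(dimV s) :=
  u *: rep q s E0p + v *: (rep q s E1m *m rep q s K1).
Definition Lop (us vs : F) : 'M[F]_(dimV s) :=
  us *: rep q s E1p + vs *: (rep q s E0m *m rep q s K0).
Definition Aop (a b c u v : F) : 'M[F]_(dimV s) :=
  a%:M + b *: rep q s K0 + c *: rep q s K1 + Rop u v.
Definition Asop (as_ bs cs us vs : F) : 'M[F]_(dimV s) :=
  as_%:M + bs *: rep q s K0 + cs *: rep q s K1 + Lop us vs.

Definition Es0 (d : nat) (as_ bs cs us vs : F) : 'M[F]_(dimV s) :=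
  \prod_(1 <= j < d.+1)
    ((theta as_ bs cs q d 0 - theta as_ bs cs q d j)^-1 *:
       (Asop as_ bs cs us vs - (theta as_ bs cs q d j)%:M)).

Definition tauA (d i : nat) (a b c u v : F) : 'M[F]_(dimV s) :=
  \prod_(k < i) (Aop a b c u v - (theta a b c q d k)%:M).

(* zeta_i: the scalar by which L^i R^i acts on U_0 = span(x(x)...(x)x),
   i.e. the x(x)...(x)x-coordinate of L^i R^i (x(x)...(x)x). *)
Definition zeta (i : nat) (u v us vs : F) : F :=
  ((xvec s)^T *m (Lop us vs ^+ i *m Rop u v ^+ i) *m xvec s) ord0 ord0.

End Rep.

(* Main.v *)
Require Import Defs.
From HB Require Import structures.
From mathcomp Require Import all_boot all_order all_algebra all_field.
From mathcomp Require Import zify ring.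
Import Order.TTheory GRing.Theory Num.Theory.
Local Open Scope ring_scope.
Unset Implicit Arguments.

Section Work.
Variable F : fieldType.
Variable q : F.
Hypothesis hq : q != 0.

Fixpoint homog (s : seq F) (n : nat) : 'cV[F]_(dimV s) -> Prop :=
  match s return 'cV[F]_(dimV s) -> Prop with
  | [::] => fun w => n = 0%N \/ w = 0
  | _ :: s' => fun w => homog s' n (usubmx w) /\
       (match n with 0%N => dsubmx w = 0 | n'.+1 => homog s' n' (dsubmx w) end)
  end.

Lemma homog0 s n : homog s n 0.
Proof.
elim: s n => [|a s IH] n /=; first by right.
have -> : (0 : 'cV[F]_(dimV s + dimV s)) = col_mx 0 0 by rewrite col_mx0.
rewrite col_mxKu col_mxKd; split => //; case: n => //.
Qed.

Lemma homog_col a s n (t b : 'cV[F]_(dimV s)) :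
  homog (a :: s) n (col_mx t b) <->
  homog s n t /\ (match n with 0%N => b = 0 | n'.+1 => homog s n' b end).
Proof. by rewrite /= col_mxKu col_mxKd. Qed.

Lemma homogDZ s n (x y : F) w1 w2 : homog s n w1 -> homog s n w2 ->
  homog s n (x *: w1 + y *: w2).
Proof.
elim: s n w1 w2 => [|a s IH] n w1 w2 /=.
  case=> [->|->]; first by left.
  case=> [->|->]; first by left. by right; rewrite !scaler0 addr0.
rewrite -[w1]vsubmxK -[w2]vsubmxK !col_mxKu !col_mxKd !scale_col_mx add_col_mx.
rewrite col_mxKu col_mxKd.
case: n => [|n] [h1 h2] [h3 h4]; split; try exact: IH.
by rewrite h2 h4 !scaler0 addr0.
Qed.

Lemma homogZ s n (x : F) w : homog s n w -> homog s n (x *: w).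
Proof. move=> h; have := homogDZ _ _ x 0 _ _ h h. by rewrite scale0r addr0. Qed.

Lemma homogD s n w1 w2 : homog s n w1 -> homog s n w2 -> homog s n (w1 + w2).
Proof. move=> h1 h2; have := homogDZ _ _ 1 1 _ _ h1 h2. by rewrite !scale1r. Qed.

Lemma kron2_col n (A : 'M[F]_2) (B : 'M[F]_n) (t b : 'cV[F]_n) :
  kron2 A B *m col_mx t b =
  col_mx (A ord0 ord0 *: (B *m t) + A ord0 ord_max *: (B *m b))
         (A ord_max ord0 *: (B *m t) + A ord_max ord_max *: (B *m b)).
Proof. by rewrite /kron2 mul_block_col !scalemxAl. Qed.

Lemma mx2E (m00 m01 m10 m11 : F) :
  [/\ mx2 m00 m01 m10 m11 ord0 ord0 = m00, mx2 m00 m01 m10 m11 ord0 ord_max = m01,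
      mx2 m00 m01 m10 m11 ord_max ord0 = m10 & mx2 m00 m01 m10 m11 ord_max ord_max = m11].
Proof. by rewrite !mxE. Qed.

Lemma id2E : [/\ (1%:M : 'M[F]_2) ord0 ord0 = 1, (1%:M : 'M[F]_2) ord0 ord_max = 0,
      (1%:M : 'M[F]_2) ord_max ord0 = 0 & (1%:M : 'M[F]_2) ord_max ord_max = 1].
Proof. by rewrite !mxE. Qed.


Ltac colsimp := rewrite /= ?mulmxDl !kron2_col !mxE /= ?mulmx1 ?mul1mx
  ?scale0r ?scale1r ?add0r ?addr0 ?add_col_mx ?add0r ?addr0.

Lemma E1p_col a s (t b : 'cV[F]_(dimV s)) :
  rep q (a :: s) E1p *m col_mx t b =
  col_mx (rep q s K1 *m b + rep q s E1p *m t) (rep q s E1p *m b).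
Proof. by colsimp. Qed.

Lemma E0p_col a s (t b : 'cV[F]_(dimV s)) :
  rep q (a :: s) E0p *m col_mx t b =
  col_mx (rep q s E0p *m t) ((a / q) *: (rep q s K0 *m t) + rep q s E0p *m b).
Proof. by colsimp. Qed.
Lemma E1m_col a s (t b : 'cV[F]_(dimV s)) :
  rep q (a :: s) E1m *m col_mx t b =
  col_mx (q^-1 *: (rep q s E1m *m t)) (t + q *: (rep q s E1m *m b)).
Proof. by colsimp. Qed.
Lemma E0m_col a s (t b : 'cV[F]_(dimV s)) :
  rep q (a :: s) E0m *m col_mx t b =
  col_mx ((q / a) *: b + q *: (rep q s E0m *m t)) (q^-1 *: (rep q s E0m *m b)).
Proof. by colsimp. Qed.
Lemma K0_col a s (t b : 'cV[F]_(dimV s)) :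
  rep q (a :: s) K0 *m col_mx t b =
  col_mx (q^-1 *: (rep q s K0 *m t)) (q *: (rep q s K0 *m b)).
Proof. by colsimp. Qed.
Lemma K1_col a s (t b : 'cV[F]_(dimV s)) :
  rep q (a :: s) K1 *m col_mx t b =
  col_mx (q *: (rep q s K1 *m t)) (q^-1 *: (rep q s K1 *m b)).
Proof. by colsimp. Qed.

Lemma qzm (z : int) : q ^ (z - 1) = q^-1 * q ^ z.
Proof. by rewrite expfzDr // -exprz_inv expr1z mulrC. Qed.
Lemma qzp (z : int) : q ^ (z + 1) = q * q ^ z.
Proof. by rewrite expfzDr // expr1z mulrC. Qed.

Lemma K0_homog s n w : homog s n w ->
  rep q s K0 *m w = q ^ (2 * (n:int) - (size s : int)) *: w.
Proof.
elim: s n w => [|a s IH] n w.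
  case=> [->|->] /=; first by rewrite mul1mx expr0z scale1r.
  by rewrite mulmx0 scaler0.
rewrite -[w]vsubmxK => /homog_col [ht hb].
rewrite K0_col (IH _ _ ht) scale_col_mx scalerA; congr col_mx.
  have -> : 2 * (n:int) - ((size s).+1 : int) = (2 * (n:int) - (size s : int)) - 1 by lia.
  by rewrite qzm.
case: n ht hb => [|n] ht hb; first by rewrite hb mulmx0 !scaler0.
rewrite (IH _ _ hb) scalerA.
have -> : 2 * (n.+1:int) - ((size s).+1 : int) = (2 * (n:int) - (size s : int)) + 1 by lia.
by rewrite qzp.
Qed.

Lemma K1_homog s n w : homog s n w ->
  rep q s K1 *m w = q ^ ((size s : int) - 2 * (n:int)) *: w.
Proof.
elim: s n w => [|a s IH] n w.
  case=> [->|->] /=; first by rewrite mul1mx expr0z scale1r.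
  by rewrite mulmx0 scaler0.
rewrite -[w]vsubmxK => /homog_col [ht hb].
rewrite K1_col (IH _ _ ht) scale_col_mx scalerA; congr col_mx.
  have -> : ((size s).+1 : int) - 2 * (n:int) = ((size s : int) - 2 * (n:int)) + 1 by lia.
  by rewrite qzp.
case: n ht hb => [|n] ht hb; first by rewrite hb mulmx0 !scaler0.
rewrite (IH _ _ hb) scalerA.
have -> : ((size s).+1 : int) - 2 * (n.+1:int) = ((size s : int) - 2 * (n:int)) - 1 by lia.
by rewrite qzm.
Qed.

Arguments K0_homog {s n w}.
Arguments K1_homog {s n w}.

Definition lowered s n (w' : 'cV[F]_(dimV s)) :=
  match n with 0%N => w' = 0 | n'.+1 => homog s n' w' end.

Lemma E1p_homog s n w : homog s n w -> lowered s n (rep q s E1p *m w).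
Proof.
elim: s n w => [|a s IH] n w.
  by move=> _; rewrite /= mul0mx; case: n => // n; exact: homog0.
rewrite -[w]vsubmxK => /homog_col [ht hb]; rewrite E1p_col.
have IHt := IH _ _ ht.
case: n ht hb IHt => [|n] ht hb IHt; rewrite /lowered in IHt *.
  by rewrite hb IHt !mulmx0 addr0 col_mx0.
apply/homog_col; split; last exact: IH.
by rewrite (K1_homog hb); apply: homogD => //; exact: homogZ.
Qed.

Lemma E0m_homog s n w : homog s n w -> lowered s n (rep q s E0m *m w).
Proof.
elim: s n w => [|a s IH] n w.
  by move=> _; rewrite /= mul0mx; case: n => // n; exact: homog0.
rewrite -[w]vsubmxK => /homog_col [ht hb]; rewrite E0m_col.
have IHt := IH _ _ ht.
case: n ht hb IHt => [|n] ht hb IHt; rewrite /lowered in IHt *.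
  by rewrite hb IHt !mulmx0 !scaler0 addr0 col_mx0.
apply/homog_col; split; first by apply: homogD; exact: homogZ.
have := IH _ _ hb; case: n {ht IHt} hb => [|n] hb h; rewrite /lowered in h.
  by rewrite h scaler0.
exact: homogZ.
Qed.

Lemma E0p_homog s n w : homog s n w -> homog s n.+1 (rep q s E0p *m w).
Proof.
elim: s n w => [|a s IH] n w.
  by move=> _; rewrite /= mul0mx; right.
rewrite -[w]vsubmxK => /homog_col [ht hb]; rewrite E0p_col.
apply/homog_col; split; first exact: IH.
apply: homogD; first by rewrite (K0_homog ht); do 2 apply: homogZ.
case: n ht hb => [|n] ht hb; first by rewrite hb mulmx0; exact: homog0.
exact: IH.
Qed.

Lemma E1m_homog s n w : homog s n w -> homog s n.+1 (rep q s E1m *m w).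
Proof.
elim: s n w => [|a s IH] n w.
  by move=> _; rewrite /= mul0mx; right.
rewrite -[w]vsubmxK => /homog_col [ht hb]; rewrite E1m_col.
apply/homog_col; split; first by apply: homogZ; exact: IH.
apply: homogD => //.
case: n ht hb => [|n] ht hb; first by rewrite hb mulmx0 scaler0; exact: homog0.
by apply: homogZ; exact: IH.
Qed.

Arguments E1p_homog {s n w}.
Arguments E0m_homog {s n w}.
Arguments E0p_homog {s n w}.
Arguments E1m_homog {s n w}.

Lemma Lop_homog s n w us vs : homog s n w -> lowered s n (Lop q s us vs *m w).
Proof.
move=> h; rewrite /Lop mulmxDl -!scalemxAl -mulmxA (K0_homog h) -scalemxAr.
have h1 := E1p_homog h; have h2 := E0m_homog h.
case: n h h1 h2 => [|n] h h1 h2; rewrite /lowered in h1 h2 *.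
  by rewrite h1 h2 !scaler0 addr0.
by apply: homogD; do ?apply: homogZ.
Qed.

Lemma Rop_homog s n w u v : homog s n w -> homog s n.+1 (Rop q s u v *m w).
Proof.
move=> h; rewrite /Rop mulmxDl -!scalemxAl -mulmxA (K1_homog h) -scalemxAr.
by apply: homogD; do ?apply: homogZ; [exact: E0p_homog|exact: E1m_homog].
Qed.

Lemma Asop_homog s n w x y z us vs : homog s n w ->
  Asop q s x y z us vs *m w = theta x y z q (size s) n *: w + Lop q s us vs *m w.
Proof.
move=> h; rewrite /Asop !mulmxDl mul_scalar_mx -!scalemxAl (K0_homog h) (K1_homog h).
by rewrite !scalerA /theta !scalerDl.
Qed.

Lemma Aop_homog s n w x y z u v : homog s n w ->
  Aop q s x y z u v *m w = theta x y z q (size s) n *: w + Rop q s u v *m w.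
Proof.
move=> h; rewrite /Aop !mulmxDl mul_scalar_mx -!scalemxAl (K0_homog h) (K1_homog h).
by rewrite !scalerA /theta !scalerDl.
Qed.

Lemma xvec_homog s : homog s 0 (xvec s).
Proof.
elim: s => [|a s IH]; first by left.
by apply/homog_col.
Qed.

Lemma homog0_x s w : homog s 0 w -> w = ((xvec s)^T *m w) 0 0 *: xvec s.
Proof.
elim: s w => [|a s IH] w.
  move=> _; rewrite /= trmx1 mul1mx; apply/matrixP => i j.
  by rewrite !ord1 !mxE /= mulr1.
rewrite -[w]vsubmxK => /homog_col [ht ->].
rewrite /= tr_col_mx mul_row_col trmx0 mul0mx addr0 scale_col_mx scaler0.
by rewrite {1}(IH _ ht).
Qed.

Lemma homog_big s n w : homog s n w -> (size s < n)%N -> w = 0.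
Proof.
elim: s n w => [|a s IH] n w.
  by case=> [->|->].
rewrite -[w]vsubmxK => /homog_col [ht hb] /= hn.
rewrite (IH _ _ ht) ?(ltnW hn) //.
case: n hn ht hb => [|n] // hn ht hb.
by rewrite (IH _ _ hb) ?col_mx0.
Qed.

Lemma sum_col_mx m1 m2 k (X : nat -> 'cV[F]_m1) (Y : nat -> 'cV[F]_m2) :
  \sum_(i < k) col_mx (X i) (Y i) = col_mx (\sum_(i < k) X i) (\sum_(i < k) Y i).
Proof.
elim: k => [|k IH]; first by rewrite !big_ord0 col_mx0.
by rewrite !big_ord_recr /= IH add_col_mx.
Qed.

Lemma homog_decomp s (w : 'cV[F]_(dimV s)) : exists f : nat -> 'cV[F]_(dimV s),
  w = \sum_(n < (size s).+1) f n /\ forall n, homog s n (f n).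
Proof.
elim: s w => [|a s IH] w.
  exists (fun n => if n == 0%N then w else 0); split.
    by rewrite big_ord_recr big_ord0 /= add0r.
  by case=> [|n] /=; [left|right].
rewrite -[w]vsubmxK.
have [f [hf1 hf2]] := IH (usubmx w).
have [g [hg1 hg2]] := IH (dsubmx w).
exists (fun n => col_mx (f n) (if n is n'.+1 then g n' else 0)); split.
  symmetry; etransitivity; first exact: (sum_col_mx (dimV s) (dimV s) (size s).+2 f (fun n => if n is n'.+1 then g n' else 0)).
  congr col_mx.
    by rewrite big_ord_recr /= (homog_big _ _ _ (hf2 _)) // addr0 hf1.
  by rewrite big_ord_recl /= add0r hg1.
by case=> [|n]; apply/homog_col.
Qed.

Arguments Lop_homog {s n w}.
Arguments Rop_homog {s n w}.
Arguments Asop_homog {s n w}.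
Arguments Aop_homog {s n w}.

Lemma comm_scal n (X : 'M[F]_n) (x : F) : GRing.comm X x%:M.
Proof. by rewrite /GRing.comm -!mulmxE scalar_mxC. Qed.

Lemma commZ n (X Y : 'M[F]_n) (x : F) : GRing.comm X Y -> GRing.comm X (x *: Y).
Proof. by rewrite /GRing.comm -!mulmxE => h; rewrite -scalemxAl -scalemxAr h. Qed.

Lemma comm_sub n (X : 'M[F]_n) (x : F) : GRing.comm X (X - x%:M).
Proof. apply: commrB; [exact: commr_refl | exact: comm_scal]. Qed.

Lemma comm_sub2 n (X : 'M[F]_n) (x y : F) : GRing.comm (X - x%:M) (X - y%:M).
Proof.
apply/commrB; first exact/commr_sym/comm_sub.
apply/commr_sym; apply: commrB; first by apply/commr_sym; exact: comm_scal.
by rewrite /GRing.comm -!mulmxE -!scalar_mxM mulrC.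
Qed.

Section Main.
Variable s : seq F.
Variables (as_ bs cs us vs : F).
Hypothesis hths : forall i j : nat, (i <= size s)%N -> (j <= size s)%N ->
  theta as_ bs cs q (size s) i = theta as_ bs cs q (size s) j -> i = j.

Local Notation ths j := (theta as_ bs cs q (size s) j).
Local Notation As := (Asop q s as_ bs cs us vs).
Local Notation L := (Lop q s us vs).
Local Notation Mf j := ((ths 0 - ths j)^-1 *: (As - (ths j)%:M)).
Local Notation E := (Es0 q s (size s) as_ bs cs us vs).

Lemma Mf_homog n w j : homog s n w ->
  Mf j *m w = (ths 0 - ths j)^-1 *: ((ths n - ths j) *: w + L *m w).
Proof.
move=> h; rewrite -scalemxAl mulmxBl mul_scalar_mx (Asop_homog _ _ _ _ _ h).
by rewrite scalerBl -!addrA [L *m w + _]addrC.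
Qed.

Lemma prod_U0 m n w : (n <= m)%N -> homog s n w ->
  homog s 0 ((\prod_(1 <= j < m.+1) Mf j) *m w).
Proof.
elim: m n w => [|m IH] n w hn h.
  rewrite big_geq // -idmxE mul1mx.
  by move: hn; rewrite leqn0 => /eqP Hn; rewrite -Hn.
rewrite big_nat_recr //= -mulmxE -mulmxA (Mf_homog _ _ _ h) -scalemxAr mulmxDr.
apply: homogZ; apply: homogD.
  rewrite -scalemxAr.
  case: (leqP n m) => hnm; first by apply: homogZ; exact: IH h.
  have -> : n = m.+1 by apply/eqP; rewrite eqn_leq hn hnm.
  by rewrite subrr scale0r; exact: homog0.
have := Lop_homog us vs h; case: n hn h => [|n] hn h /= hl.
  by rewrite hl mulmx0; exact: homog0.
exact: IH hl.
Qed.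

Lemma E_U0 w : homog s 0 (E *m w).
Proof.
have [f [-> hf]] := homog_decomp s w.
rewrite mulmx_sumr; apply: big_ind => //; first exact: homog0.
  by move=> x y; apply: homogD.
move=> i _; apply: (prod_U0 (size s) i); [exact: (ltn_ord i) | exact: hf].
Qed.

Lemma E_id x : homog s 0 x -> E *m x = x.
Proof.
move=> hx.
suff H : forall m, (m <= size s)%N -> (\prod_(1 <= j < m.+1) Mf j) *m x = x by exact: H.
elim=> [|m IH] hm; first by rewrite big_geq // -idmxE mul1mx.
rewrite big_nat_recr //= -mulmxE -mulmxA (Mf_homog _ _ _ hx).
have := Lop_homog us vs hx; rewrite /lowered => ->.
rewrite addr0 scalerA mulVf ?scale1r ?IH ?(ltnW hm) //.
by rewrite subr_eq0; apply/eqP => /hths H; have := H isT hm.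
Qed.

Lemma comm_AE : GRing.comm As E.
Proof.
apply: commr_prod => j _; apply: commZ; exact: comm_sub.
Qed.

Lemma E_A (w : 'cV[F]_(dimV s)) : E *m (As *m w) = ths 0 *: (E *m w).
Proof.
have hc : E *m As = As *m E by exact: (esym comm_AE).
rewrite mulmxA hc -mulmxA.
have h := E_U0 w.
by rewrite (Asop_homog _ _ _ _ _ h); have := Lop_homog us vs h; rewrite /lowered => ->; rewrite addr0.
Qed.

Lemma E_homog n w : (n <= size s)%N -> homog s n w ->
  E *m w = (\prod_(1 <= j < n.+1) (ths 0 - ths j))^-1 *: (L ^+ n *m w).
Proof.
elim: n w => [|n IH] w hn h.
  by rewrite big_geq // invr1 scale1r expr0 -idmxE mul1mx E_id.
have hl := Lop_homog us vs h; rewrite /lowered in hl.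
have hA := E_A w; rewrite (Asop_homog _ _ _ _ _ h) mulmxDr -scalemxAr in hA.
have hne : ths 0 - ths n.+1 != 0.
  by rewrite subr_eq0; apply/eqP => /hths H; have := H isT hn.
have -> : E *m w = (ths 0 - ths n.+1)^-1 *: (E *m (L *m w)).
  have -> : E *m (L *m w) = (ths 0 - ths n.+1) *: (E *m w).
    by rewrite scalerBl -hA addrC addKr.
  by rewrite scalerA mulVf // scale1r.
rewrite (IH _ (ltnW hn) hl) scalerA [in RHS]big_nat_recr //= invfM exprSr mulmxA.
by rewrite mulrC.
Qed.

End Main.

Lemma mx_ext n m (M N : 'M[F]_(n, m)) : (forall w : 'cV_m, M *m w = N *m w) -> M = N.
Proof.
move=> h; apply/matrixP => i j.
have := congr1 (fun X : 'cV_n => X i 0) (h (delta_mx j 0)).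
by rewrite -!colE !mxE.
Qed.

Lemma tau_x s i a b c u v :
  tauA q s (size s) i a b c u v *m xvec s = Rop q s u v ^+ i *m xvec s /\
  homog s i (Rop q s u v ^+ i *m xvec s).
Proof.
elim: i => [|i [IH1 IH2]].
  by rewrite /tauA big_ord0 expr0 -idmxE mul1mx; split => //; exact: xvec_homog.
have hc : GRing.comm (Aop q s a b c u v - (theta a b c q (size s) i)%:M)
                     (tauA q s (size s) i a b c u v).
  by apply: commr_prod => k _; exact: comm_sub2.
have -> : tauA q s (size s) i.+1 a b c u v =
   (Aop q s a b c u v - (theta a b c q (size s) i)%:M) * tauA q s (size s) i a b c u v.
  by rewrite hc /tauA big_ord_recr.
rewrite -mulmxE -mulmxA IH1 mulmxBl mul_scalar_mx (Aop_homog _ _ _ _ _ IH2).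
rewrite addrAC subrr add0r exprS -mulmxE mulmxA; split => //.
rewrite -mulmxA; exact: Rop_homog.
Qed.
End Work.

Theorem lemma9p10 (F : closedFieldType) (d : nat) (alpha : seq F)
  (q a b c as_ bs cs u v us vs : F)
  (hsize : size alpha = d)
  (halpha : forall x, x \in alpha -> x != 0)
  (hq : q != 0) (hb : b != 0) (hc : c != 0) (hbs : bs != 0) (hcs : cs != 0)
  (hq2 : q ^+ 2 != 1) (hq2' : q ^+ 2 != -1)
  (hth : forall i j : nat, (i <= d)%N -> (j <= d)%N ->
           theta a b c q d i = theta a b c q d j -> i = j)
  (hths : forall i j : nat, (i <= d)%N -> (j <= d)%N ->
           theta as_ bs cs q d i = theta as_ bs cs q d j -> i = j)
  (huv : u * vs = - b * bs * q^-1 * (q - q^-1) ^+ 2)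
  (hvu : v * us = - c * cs * q^-1 * (q - q^-1) ^+ 2)
  (i : nat) (hi : (i <= d)%N) :
  Es0 q alpha d as_ bs cs us vs *m tauA q alpha d i a b c u v
    *m Es0 q alpha d as_ bs cs us vs
  = (zeta q alpha i u v us vs
       / \prod_(1 <= j < i.+1)
            (theta as_ bs cs q d 0 - theta as_ bs cs q d j))
    *: Es0 q alpha d as_ bs cs us vs.
Proof.
subst d.
set E := Es0 _ _ _ _ _ _ _ _.
set k := \prod_(1 <= j < i.+1) _.
apply: mx_ext => w.
have hy := E_U0 _ _ hq alpha as_ bs cs us vs w.
rewrite -scalemxAl -!mulmxA (homog0_x _ _ _ hy).
rewrite -!scalemxAr.
have [h1 h2] := tau_x _ _ hq alpha i a b c u v.
rewrite h1 (E_homog _ _ hq alpha _ _ _ _ _ hths _ _ hi h2).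
have hk : k != 0.
  rewrite prodf_seq_neq0; apply/allP => j; rewrite mem_index_iota => /andP [hj1 hj2].
  rewrite subr_eq0; apply/eqP => /hths H.
  by move: hj1; rewrite -(H isT (leq_trans (ltnSE hj2) hi)).
have hL : homog _ alpha 0 (Lop q alpha us vs ^+ i *m (Rop q alpha u v ^+ i *m xvec alpha)).
  have := E_U0 _ _ hq alpha as_ bs cs us vs (Rop q alpha u v ^+ i *m xvec alpha).
  rewrite (E_homog _ _ hq alpha _ _ _ _ _ hths _ _ hi h2) => /(homogZ _ _ _ k).
  by rewrite scalerA mulfV // scale1r.
rewrite {1}(homog0_x _ _ _ hL) /zeta !scalerA; congr (_ *: _).
rewrite !mulmxA; ring.
Qed.
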